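(* Let $\{\mathbf{x}^k,\mathbf{y}^k,\mathbf{z}^k,\boldsymbol{\lambda}^k,\theta^{(k)},\beta^{(k)}\}$ be generated by the Fast PALM algorithm. Then for every $k\ge0$ and every $\mathbf{x}$, $$\frac{1-\theta^{(k+1)}}{(\theta^{(k+1)})^2}\bigl(f(\mathbf{x}^{k+1})-f(\mathbf{x})\bigr)-\frac{1}{\theta^{(k)}}\bigl\langle\mathcal{A}^T(\boldsymbol{\lambda}^{k+1}),\mathbf{x}-\mathbf{z}^{k+1}\bigr\rangle\le\frac{1-\theta^{(k)}}{(\theta^{(k)})^2}\bigl(f(\mathbf{x}^k)-f(\mathbf{x})\bigr)+\frac{L}{2}\bigl(\|\mathbf{z}^k-\mathbf{x}\|^2-\|\mathbf{z}^{k+1}-\mathbf{x}\|^2\bigr).$$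
   Context: Setting: finite-dimensional real inner product spaces with induced norms $\|\cdot\|$. Problem: $\min_{\mathbf{x}} f(\mathbf{x})=g(\mathbf{x})+h(\mathbf{x})$ subject to $\mathcal{A}(\mathbf{x})=\mathbf{b}$, where $g,h$ are proper convex lower semicontinuous, $g$ is differentiable with $\|\nabla g(\mathbf{x})-\nabla g(\mathbf{y})\|\le L\|\mathbf{x}-\mathbf{y}\|$ for all $\mathbf{x},\mathbf{y}$ ($L>0$), $\mathcal{A}$ is linear with adjoint $\mathcal{A}^T$. Fast PALM: given $\mathbf{x}^0,\mathbf{z}^0,\boldsymbol{\lambda}^0$ and $\theta^{(0)}=\beta^{(0)}=1$, for $k=0,1,2,\dots$: $\mathbf{y}^{k+1}=(1-\theta^{(k)})\mathbf{x}^k+\theta^{(k)}\mathbf{z}^k$; $\mathbf{z}^{k+1}=\arg\min_{\mathbf{x}}\ \langle\nabla g(\mathbf{y}^{k+1}),\mathbf{x}\rangle+h(\mathbf{x})+\langle\boldsymbol{\lambda}^k,\mathcal{A}(\mathbf{x})\rangle+\frac{\beta^{(k)}}{2}\|\mathcal{A}(\mathbf{x})-\mathbf{b}\|^2+\frac{L\theta^{(k)}}{2}\|\mathbf{x}-\mathbf{z}^k\|^2$; $\mathbf{x}^{k+1}=(1-\theta^{(k)})\mathbf{x}^k+\theta^{(k)}\mathbf{z}^{k+1}$; $\boldsymbol{\lambda}^{k+1}=\boldsymbol{\lambda}^k+\beta^{(k)}(\mathcal{A}(\mathbf{z}^{k+1})-\mathbf{b})$; $\theta^{(k+1)}=\frac{-(\theta^{(k)})^2+\sqrt{(\theta^{(k)})^4+4(\theta^{(k)})^2}}{2}$;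 $\beta^{(k+1)}=1/\theta^{(k+1)}$. *)

(* Defs.v *)
From mathcomp Require Import all_boot.
From Stdlib Require Import Reals.
Open Scope R_scope.

Definition vec (n : nat) := 'I_n -> R.

Definition vadd {n} (u v : vec n) : vec n := fun i => u i + v i.
Definition vsub {n} (u v : vec n) : vec n := fun i => u i - v i.
Definition vscal {n} (a : R) (u : vec n) : vec n := fun i => a * u i.

Definition dot {n} (u v : vec n) : R := \big[Rplus/0]_(i < n) (u i * v i).
Definition norm {n} (u : vec n) : R := sqrt (dot u u).

Definition is_linear {n m} (A : vec n -> vec m) : Prop :=
  forall (a c : R) (u v : vec n),
    A (vadd (vscal a u) (vscal c v)) = vadd (vscal a (A u)) (vscal c (A v)).

Definition is_adjoint {n m} (A : vec n -> vec m) (At : vec m -> vec n) : Prop :=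
  forall (u : vec n) (w : vec m), dot (A u) w = dot u (At w).

Definition convex_fun {n} (g : vec n -> R) : Prop :=
  forall (u v : vec n) (t : R), 0 <= t <= 1 ->
    g (vadd (vscal t u) (vscal (1 - t) v)) <= t * g u + (1 - t) * g v.

Definition has_gradient {n} (g : vec n -> R) (grad : vec n -> vec n) : Prop :=
  forall (u : vec n) (eps : R), 0 < eps ->
    exists delta, 0 < delta /\
      forall d : vec n, norm d < delta ->
        Rabs (g (vadd u d) - g u - dot (grad u) d) <= eps * norm d.

Definition lipschitz_grad {n} (grad : vec n -> vec n) (L : R) : Prop :=
  forall u v : vec n, norm (vsub (grad u) (grad v)) <= L * norm (vsub u v).

(* An extended-real-valued function h : R^n -> R U {+oo} is encoded by its
   effective domain [dom] and a real-valued [h] which is only meaningful on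
   [dom]; outside [dom] the function value is +oo. *)
Definition ext_proper {n} (dom : vec n -> Prop) : Prop := exists u, dom u.

Definition ext_convex {n} (dom : vec n -> Prop) (h : vec n -> R) : Prop :=
  forall (u v : vec n) (t : R), dom u -> dom v -> 0 <= t <= 1 ->
    dom (vadd (vscal t u) (vscal (1 - t) v)) /\
    h (vadd (vscal t u) (vscal (1 - t) v)) <= t * h u + (1 - t) * h v.

(* Lower semicontinuity of the extended function: for every level c strictly
   below the (possibly infinite) value at u, the function stays above c near u. *)
Definition ext_lsc {n} (dom : vec n -> Prop) (h : vec n -> R) : Prop :=
  forall (u : vec n) (c : R), (dom u -> c < h u) ->
    exists delta, 0 < delta /\
      forall v : vec n, norm (vsub v u) < delta -> dom v -> c < h v.

Definition palm_sub {n m} (gradg : vec n -> vec n) (h : vec n -> R)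
    (A : vec n -> vec m) (b : vec m) (L : R)
    (yk1 zk : vec n) (lamk : vec m) (thetak betak : R) (u : vec n) : R :=
  dot (gradg yk1) u + h u + dot lamk (A u)
  + betak / 2 * (norm (vsub (A u) b)) ^ 2
  + L * thetak / 2 * (norm (vsub u zk)) ^ 2.

(* Main.v *)
Require Import Defs.
From mathcomp Require Import all_boot.
From Stdlib Require Import Reals.
From Stdlib Require Import Lra Psatz FunctionalExtensionality.
Open Scope R_scope.

Lemma sum_lin (n : nat) (F G : 'I_n -> R) (a c : R) :
  \big[Rplus/0]_(i < n) (a * F i + c * G i) =
  a * \big[Rplus/0]_(i < n) F i + c * \big[Rplus/0]_(i < n) G i.
Proof.
apply (big_rec3 (fun x y z => x = a * y + c * z)); first by ring.
by move=> i y1 y2 y3 _ ->; ring.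
Qed.

Lemma sum_ge0 (n : nat) (F : 'I_n -> R) :
  (forall i, 0 <= F i) -> 0 <= \big[Rplus/0]_(i < n) F i.
Proof.
move=> H; apply (big_ind (fun x => 0 <= x)); [lra| move=> x y; lra | by []].
Qed.

Lemma vec_ext {n} (u v : vec n) : (forall i, u i = v i) -> u = v.
Proof. move=> H; apply functional_extensionality; exact H. Qed.

Lemma dot_comm {n} (u v : vec n) : dot u v = dot v u.
Proof. rewrite /dot; apply eq_bigr => i _; ring. Qed.

Lemma dot_lin_l {n} (a c : R) (u v w : vec n) :
  dot (fun i => a * u i + c * v i) w = a * dot u w + c * dot v w.
Proof.
rewrite /dot -sum_lin; apply eq_bigr => i _; ring.
Qed.

Lemma dot_lin_r {n} (a c : R) (u v w : vec n) :
  dot w (fun i => a * u i + c * v i) = a * dot w u + c * dot w v.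
Proof. rewrite dot_comm dot_lin_l (dot_comm u) (dot_comm v); ring. Qed.

Lemma dot_ext_l {n} (u u' w : vec n) : (forall i, u i = u' i) -> dot u w = dot u' w.
Proof. by move=> H; rewrite (vec_ext u u' H). Qed.

Lemma dot_addl {n} (u v w : vec n) : dot (vadd u v) w = dot u w + dot v w.
Proof.
rewrite (dot_ext_l _ (fun i => 1 * u i + 1 * v i)); last by move=> i; rewrite /vadd; ring.
rewrite dot_lin_l; ring.
Qed.
Lemma dot_subl {n} (u v w : vec n) : dot (vsub u v) w = dot u w - dot v w.
Proof.
rewrite (dot_ext_l _ (fun i => 1 * u i + (-1) * v i)); last by move=> i; rewrite /vsub; ring.
rewrite dot_lin_l; ring.
Qed.
Lemma dot_scall {n} a (u w : vec n) : dot (vscal a u) w = a * dot u w.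
Proof.
rewrite (dot_ext_l _ (fun i => a * u i + 0 * u i)); last by move=> i; rewrite /vscal; ring.
rewrite dot_lin_l; ring.
Qed.
Lemma dot_addr {n} (u v w : vec n) : dot w (vadd u v) = dot w u + dot w v.
Proof. by rewrite dot_comm dot_addl !(dot_comm w). Qed.
Lemma dot_subr {n} (u v w : vec n) : dot w (vsub u v) = dot w u - dot w v.
Proof. by rewrite dot_comm dot_subl !(dot_comm w). Qed.
Lemma dot_scalr {n} a (u w : vec n) : dot w (vscal a u) = a * dot w u.
Proof. by rewrite dot_comm dot_scall !(dot_comm w). Qed.

Lemma dot_ge0 {n} (u : vec n) : 0 <= dot u u.
Proof. apply sum_ge0 => i; nra. Qed.

Lemma norm_sq {n} (u : vec n) : norm u ^ 2 = dot u u.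
Proof. rewrite /norm /= Rmult_1_r sqrt_sqrt //; apply dot_ge0. Qed.

Lemma norm_ge0 {n} (u : vec n) : 0 <= norm u.
Proof. apply sqrt_pos. Qed.

Lemma norm_scal {n} a (u : vec n) : norm (vscal a u) = Rabs a * norm u.
Proof.
rewrite /norm dot_scall dot_scalr -Rmult_assoc sqrt_mult_alt.
- by rewrite sqrt_Rsqr_abs.
- nra.
Qed.

Lemma cauchy_schwarz {n} (u v : vec n) : dot u v <= norm u * norm v.
Proof.
set A := dot u u; set B := dot u v; set C := dot v v.
have Hq : forall s, 0 <= A - 2 * s * B + s * s * C.
  move=> s; have := dot_ge0 (vsub u (vscal s v)).
  rewrite !dot_subl !dot_subr !dot_scall !dot_scalr (dot_comm v u) -/A -/B -/C.
  lra.
have HA : 0 <= A by apply dot_ge0.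
have HC : 0 <= C by apply dot_ge0.
have HB2 : B * B <= A * C.
  case: (Req_dec C 0) => HC0.
  - case: (Req_dec B 0) => HB0; first nra.
    have := Hq ((A + 1) / (2 * B)).
    rewrite HC0 => H.
    have E : A - 2 * ((A + 1) / (2 * B)) * B + (A + 1) / (2 * B) * ((A + 1) / (2 * B)) * 0 = -1 by field.
    lra.
  - have := Hq (B / C). move=> H.
    have HCp : 0 < C by lra.
    have E : (A - 2 * (B / C) * B + B / C * (B / C) * C) * C = A * C - B * B by field.
    have : 0 <= (A - 2 * (B / C) * B + B / C * (B / C) * C) * C by nra.
    lra.
rewrite /norm -/A -/C -sqrt_mult_alt //.
have HS := sqrt_pos (A * C).
case: (Rle_dec B 0) => HB; first lra.
rewrite -(sqrt_Rsqr B); last lra.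
apply sqrt_le_1_alt; rewrite /Rsqr; lra.
Qed.

Lemma G_deriv {n} (g : vec n -> R) gradg (Hg : has_gradient g gradg) (w d : vec n) t0 :
  derivable_pt_lim (fun t => g (vadd w (vscal t d))) t0
    (dot (gradg (vadd w (vscal t0 d))) d).
Proof.
move=> eps Heps.
set u0 := vadd w (vscal t0 d).
have Hnd := norm_ge0 d.
have He' : 0 < eps / 2 / (norm d + 1).
  apply Rdiv_lt_0_compat; lra.
have [del [Hdel Hfr]] := Hg u0 _ He'.
have Hdp : 0 < del / (norm d + 1) by apply Rdiv_lt_0_compat; lra.
exists (mkposreal _ Hdp) => h Hh0 Hh /=.
have E : vadd w (vscal (t0 + h) d) = vadd u0 (vscal h d).
  apply vec_ext => i; rewrite /u0 /vadd /vscal; ring.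
rewrite E.
have Hn : norm (vscal h d) < del.
  rewrite norm_scal.
  have Hh' : Rabs h * (norm d + 1) < del.
    move: Hh => /= Hh.
    have : Rabs h < del / (norm d + 1) by [].
    move=> H1; apply (Rmult_lt_compat_r (norm d + 1)) in H1; last lra.
    by rewrite /Rdiv Rmult_assoc Rinv_l in H1; lra.
  have := Rabs_pos h; nra.
have Hb := Hfr _ Hn.
rewrite dot_scalr norm_scal in Hb.
have Hah : 0 < Rabs h by apply Rabs_pos_lt.
set D := dot (gradg u0) d in Hb *.
set Q := g (vadd u0 (vscal h d)) - g u0.
have Hb' : Rabs (Q - h * D) <= eps / 2 / (norm d + 1) * (Rabs h * norm d) by [].
have E2 : (Q / h - D) = (Q - h * D) / h by field.
rewrite E2 /Rdiv Rabs_mult Rabs_inv.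
apply (Rmult_lt_reg_r (Rabs h)) => //.
rewrite /Rdiv Rmult_assoc Rinv_l; last lra.
rewrite Rmult_1_r.
have : eps / 2 / (norm d + 1) * (Rabs h * norm d) < eps * Rabs h.
  have Hk : norm d / (norm d + 1) < 1.
    apply (Rmult_lt_reg_r (norm d + 1)); first lra.
    rewrite /Rdiv Rmult_assoc Rinv_l; lra.
  have : eps / 2 / (norm d + 1) * (Rabs h * norm d) = eps / 2 * Rabs h * (norm d / (norm d + 1)) by field; lra.
  move=> ->.
  have : 0 <= norm d / (norm d + 1) by apply Rle_mult_inv_pos; lra.
  move=> Hk0; have : eps / 2 * Rabs h * (norm d / (norm d + 1)) <= eps / 2 * Rabs h * 1 by apply Rmult_le_compat_l; nra.
  move=> ?; nra.
move=> ?; lra.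
Qed.

Lemma poly_deriv (D K t : R) :
  derivable_pt_lim (fun t => D * t + K * t ^ 2) t (D + K * (2 * t)).
Proof.
have H1 := derivable_pt_lim_scal id D t 1 (derivable_pt_lim_id t).
have H2 := derivable_pt_lim_scal (fun x => x ^ 2) K t _ (derivable_pt_lim_pow t 2).
have H3 := derivable_pt_lim_plus _ _ t _ _ H1 H2.
have -> : D + K * (2 * t) = D * 1 + K * (INR 2 * t ^ 1) by simpl; ring.
exact H3.
Qed.

Lemma descent {n} (g : vec n -> R) gradg L (HL : 0 < L)
  (Hg : has_gradient g gradg) (Hlip : lipschitz_grad gradg L) (w d : vec n) :
  g (vadd w d) <= g w + dot (gradg w) d + L / 2 * norm d ^ 2.
Proof.
set D := dot (gradg w) d.
set N := dot d d.
set G := fun t => g (vadd w (vscal t d)).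
set P := fun t => D * t + L / 2 * N * t ^ 2.
have Hd : forall c, derivable_pt_lim (fun t => G t - P t) c
   (dot (gradg (vadd w (vscal c d))) d - (D + L / 2 * N * (2 * c))).
  move=> c; apply (derivable_pt_lim_minus G P).
  - exact: G_deriv.
  - exact: poly_deriv.
have [c [Hc Hc01]] := MVT_cor2 _ _ 0 1 Rlt_0_1 (fun c _ => Hd c).
have EG1 : G 1 = g (vadd w d) by rewrite /G; f_equal; apply vec_ext => i; rewrite /vadd /vscal; ring.
have EG0 : G 0 = g w by rewrite /G; f_equal; apply vec_ext => i; rewrite /vadd /vscal; ring.
have HP1 : P 1 = D + L / 2 * N by rewrite /P; simpl; ring.
have HP0 : P 0 = 0 by rewrite /P; simpl; ring.
rewrite EG1 EG0 HP1 HP0 in Hc.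
have Hdiff : dot (gradg (vadd w (vscal c d))) d - D <= L * c * N.
  rewrite /D -dot_subl.
  apply (Rle_trans _ _ _ (cauchy_schwarz _ _)).
  have E : vsub (vadd w (vscal c d)) w = vscal c d
    by apply vec_ext => i; rewrite /vadd /vsub /vscal; ring.
  have Hl := Hlip (vadd w (vscal c d)) w.
  rewrite E norm_scal Rabs_right in Hl; last lra.
  have Hn := norm_ge0 d.
  have HN : norm d * norm d = N by rewrite /N -norm_sq /=; ring.
  have Hn2 := norm_ge0 (vsub (gradg (vadd w (vscal c d))) (gradg w)).
  have : norm (vsub (gradg (vadd w (vscal c d))) (gradg w)) * norm d <= L * (c * norm d) * norm d
    by apply Rmult_le_compat_r.
  rewrite -HN; lra.
rewrite norm_sq -/N.
lra.
Qed.

Lemma grad_ineq {n} (g : vec n -> R) gradg (Hg : has_gradient g gradg)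
  (Hc : convex_fun g) (w u : vec n) :
  g w + dot (gradg w) (vsub u w) <= g u.
Proof.
set d := vsub u w.
set G := fun t => g (vadd w (vscal t d)).
have HD := G_deriv g gradg Hg w d 0.
have E0 : vadd w (vscal 0 d) = w by apply vec_ext => i; rewrite /vadd /vscal; ring.
rewrite E0 in HD.
set D := dot (gradg w) d in HD *.
have Hconv : forall t, 0 <= t <= 1 -> G t <= t * g u + (1 - t) * g w.
  move=> t Ht.
  have E : vadd w (vscal t d) = vadd (vscal t u) (vscal (1 - t) w)
    by apply vec_ext => i; rewrite /vadd /vscal /d /vsub; ring.
  rewrite /G E; exact: Hc.
have HG0 : G 0 = g w by rewrite /G E0.
apply Rnot_lt_le => Hlt.
set eps := g w + D - g u.
have Heps : 0 < eps by rewrite /eps; lra.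
have [del Hdel] := HD eps Heps.
set t := Rmin (del / 2) (1 / 2).
have Hdp := cond_pos del.
have Ht0 : 0 < t by apply Rmin_glb_lt; lra.
have Ht1 : t <= 1 / 2 by apply Rmin_r.
have Htd : t <= del / 2 by apply Rmin_l.
have Hab : Rabs t < del by rewrite Rabs_right; lra.
have Hb : Rabs ((G (0 + t) - G 0) / t - D) < eps := Hdel t (Rgt_not_eq _ _ Ht0) Hab.
rewrite Rplus_0_l HG0 in Hb.
have Ht01 : 0 <= t <= 1 by lra.
have Hcv := Hconv t Ht01.
have Hq : (G t - g w) / t <= g u - g w.
  apply (Rmult_le_reg_r t) => //.
  rewrite /Rdiv Rmult_assoc Rinv_l; lra.
have := Rle_abs ((G t - g w) / t - D).
have := Rabs_minus_sym ((G t - g w) / t) D.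
have := Rle_abs (D - (G t - g w) / t).
rewrite /eps in Hb *.
lra.
Qed.

Lemma norm_sq_comb {n} (r s : vec n) t :
  norm (vadd r (vscal t s)) ^ 2 = dot r r + 2 * t * dot r s + t ^ 2 * dot s s.
Proof.
rewrite norm_sq !dot_addl !dot_addr !dot_scall !dot_scalr (dot_comm s r); simpl; ring.
Qed.

Lemma lin_comb {n m} (A : vec n -> vec m) (HA : is_linear A) a c u v :
  A (vadd (vscal a u) (vscal c v)) = vadd (vscal a (A u)) (vscal c (A v)).
Proof. exact: HA. Qed.

Lemma lin_sub {n m} (A : vec n -> vec m) (HA : is_linear A) u v :
  A (vsub u v) = vsub (A u) (A v).
Proof.
have E : vsub u v = vadd (vscal 1 u) (vscal (-1) v)
  by apply vec_ext => i; rewrite /vsub /vadd /vscal; ring.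
rewrite E HA; apply vec_ext => i; rewrite /vsub /vadd /vscal; ring.
Qed.

Lemma lim_lin (lin K : R) : (forall t, 0 < t <= 1 -> 0 <= t * lin + t ^ 2 * K) -> 0 <= lin.
Proof.
move=> H; apply Rnot_lt_le => Hl.
set a := Rabs K + 1.
have Ha : 0 < a by have := Rabs_pos K; rewrite /a; lra.
set t := Rmin 1 (- lin / (2 * a)).
have Hq : 0 < - lin / (2 * a) by apply Rdiv_lt_0_compat; lra.
have Ht0 : 0 < t by apply Rmin_glb_lt; lra.
have Ht1 : t <= 1 by apply Rmin_l.
have Ht2 : t <= - lin / (2 * a) by apply Rmin_r.
have Hta : t * a <= - lin / 2.
  have : t * a <= - lin / (2 * a) * a by apply Rmult_le_compat_r; lra.
  have -> : - lin / (2 * a) * a = - lin / 2 by field; lra.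
  done.
have HK : K <= a by have := Rle_abs K; rewrite /a; lra.
have := H t (conj Ht0 Ht1).
have : t * K <= t * a by apply Rmult_le_compat_l; lra.
move=> H1 H2.
have : 0 <= lin + t * K.
  apply (Rmult_le_reg_l t) => //; simpl in H2; nra.
lra.
Qed.

Lemma opt_cond {n m} (gradg : vec n -> vec n) (h : vec n -> R) (hdom : vec n -> Prop)
  (A : vec n -> vec m) (At : vec m -> vec n) (b : vec m) (L : R)
  (y zk z' : vec n) (lam : vec m) (th be : R)
  (Hhconv : ext_convex hdom h) (HA : is_linear A) (HAt : is_adjoint A At)
  (Hz : hdom z')
  (Hmin : forall u, hdom u ->
     palm_sub gradg h A b L y zk lam th be z' <= palm_sub gradg h A b L y zk lam th be u)
  (u : vec n) (Hu : hdom u) :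
  h z' + dot (gradg y) (vsub z' u)
  + dot (At (vadd lam (vscal be (vsub (A z') b)))) (vsub z' u)
  + L * th * dot (vsub z' zk) (vsub z' u) <= h u.
Proof.
set c := gradg y.
set r := vsub (A z') b.
set q := vsub z' zk.
set s := vsub (A u) (A z').
set p := vsub u z'.
set lin := dot c u - dot c z' + h u - h z' + dot lam (A u) - dot lam (A z')
   + be * (dot r (A u) - dot r (A z')) + L * th * (dot q u - dot q z').
set K := be / 2 * dot s s + L * th / 2 * dot p p.
have Hlin : 0 <= lin.
  apply (lim_lin lin K) => t Ht.
  set wt := vadd (vscal t u) (vscal (1 - t) z').
  have [Hwd Hwh] := Hhconv u z' t Hu Hz (conj (Rlt_le _ _ (proj1 Ht)) (proj2 Ht)).
  have Hm := Hmin wt Hwd.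
  rewrite /palm_sub in Hm.
  have E1 : vsub (A wt) b = vadd r (vscal t s).
    rewrite /wt HA; apply vec_ext => i; rewrite /r /s /vsub /vadd /vscal; ring.
  have E2 : vsub wt zk = vadd q (vscal t p).
    apply vec_ext => i; rewrite /wt /q /p /vsub /vadd /vscal; ring.
  rewrite E1 E2 !norm_sq_comb in Hm.
  have E3 : vsub z' zk = q by [].
  rewrite -/r E3 !norm_sq in Hm.
  have E4 : dot c wt = t * dot c u + (1 - t) * dot c z' by rewrite /wt /vadd /vscal dot_lin_r.
  have E5 : dot lam (A wt) = t * dot lam (A u) + (1 - t) * dot lam (A z')
    by rewrite /wt HA /vadd /vscal dot_lin_r.
  rewrite -/c E4 E5 in Hm.
  have Ers : dot r s = dot r (A u) - dot r (A z') by rewrite /s dot_subr.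
  have Eqp : dot q p = dot q u - dot q z' by rewrite /p dot_subr.
  rewrite Ers Eqp in Hm.
  rewrite /lin /K; simpl in Hm |- *.
  rewrite -/wt in Hwh; lra.
have Eadj : dot (At (vadd lam (vscal be r))) (vsub z' u)
   = dot lam (A z') - dot lam (A u) + be * (dot r (A z') - dot r (A u)).
  rewrite dot_comm -HAt (lin_sub A HA) dot_comm dot_addl dot_scall !dot_subr; ring.
rewrite -/r Eadj dot_subr dot_subr -/q.
rewrite /lin in Hlin; lra.
Qed.

Lemma theta_step (t : R) (Ht : 0 < t <= 1) :
  let t' := (- t ^ 2 + sqrt (t ^ 4 + 4 * t ^ 2)) / 2 in
  0 < t' <= 1 /\ t' ^ 2 = t ^ 2 * (1 - t').
Proof.
move=> t'.
have Hp : 0 <= t ^ 4 + 4 * t ^ 2 by simpl; nra.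
set S := sqrt (t ^ 4 + 4 * t ^ 2).
have HS2 : S * S = t ^ 4 + 4 * t ^ 2 by rewrite /S sqrt_sqrt.
have HS0 : 0 <= S by apply sqrt_pos.
have Ht2 : 0 < t ^ 2 by simpl; nra.
have HSgt : t ^ 2 < S.
  apply Rnot_le_lt => H.
  have : S * S <= t ^ 2 * t ^ 2 by apply Rmult_le_compat; lra.
  simpl in *; nra.
have HSle : S <= t ^ 2 + 2.
  apply Rnot_lt_le => H.
  have : (t ^ 2 + 2) * (t ^ 2 + 2) < S * S by apply Rmult_le_0_lt_compat; lra.
  simpl in *; nra.
rewrite /t' -/S; split; first (split; lra).
simpl in *; nra.
Qed.

Lemma dist_id {n} (a b c : vec n) :
  2 * dot (vsub a b) (vsub a c) =
  norm (vsub a b) ^ 2 + norm (vsub a c) ^ 2 - norm (vsub b c) ^ 2.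
Proof.
rewrite !norm_sq !dot_subl !dot_subr (dot_comm b a) (dot_comm c a) (dot_comm c b); ring.
Qed.
Theorem proposition1
  (n m : nat) (g h : vec n -> R) (hdom : vec n -> Prop) (gradg : vec n -> vec n)
  (L : R) (A : vec n -> vec m) (At : vec m -> vec n) (b : vec m)
  (x y z : nat -> vec n) (lam : nat -> vec m) (theta beta : nat -> R)
  (HL : 0 < L)
  (Hgconv : convex_fun g)
  (Hgrad : has_gradient g gradg)
  (Hlip : lipschitz_grad gradg L)
  (Hhprop : ext_proper hdom)
  (Hhconv : ext_convex hdom h)
  (Hhlsc : ext_lsc hdom h)
  (HAlin : is_linear A)
  (HAt : is_adjoint A At)
  (Htheta0 : theta 0%nat = 1)
  (Hbeta0 : beta 0%nat = 1)
  (Hy : forall k, y (S k) = vadd (vscal (1 - theta k) (x k)) (vscal (theta k) (z k)))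
  (Hzdom : forall k, hdom (z (S k)))
  (Hzmin : forall k (u : vec n), hdom u ->
     palm_sub gradg h A b L (y (S k)) (z k) (lam k) (theta k) (beta k) (z (S k))
     <= palm_sub gradg h A b L (y (S k)) (z k) (lam k) (theta k) (beta k) u)
  (Hx : forall k, x (S k) = vadd (vscal (1 - theta k) (x k)) (vscal (theta k) (z (S k))))
  (Hlam : forall k, lam (S k) = vadd (lam k) (vscal (beta k) (vsub (A (z (S k))) b)))
  (Htheta : forall k, theta (S k) =
     (- (theta k) ^ 2 + sqrt ((theta k) ^ 4 + 4 * (theta k) ^ 2)) / 2)
  (Hbeta : forall k, beta (S k) = 1 / theta (S k)) :
  forall (k : nat) (u : vec n), hdom u ->
    (1 - theta (S k)) / (theta (S k)) ^ 2
      * ((g (x (S k)) + h (x (S k))) - (g u + h u))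
    - 1 / theta k * dot (At (lam (S k))) (vsub u (z (S k)))
    <= (1 - theta k) / (theta k) ^ 2 * ((g (x k) + h (x k)) - (g u + h u))
       + L / 2 * ((norm (vsub (z k) u)) ^ 2 - (norm (vsub (z (S k)) u)) ^ 2).
Proof.
move=> k u Hu.
have Hth : forall j, 0 < theta j <= 1.
  elim=> [|j IH]; first by rewrite Htheta0; lra.
  rewrite Htheta; exact: (proj1 (theta_step _ IH)).
have Hrec : forall j, theta (S j) ^ 2 = theta j ^ 2 * (1 - theta (S j)).
  move=> j; rewrite Htheta; exact: (proj2 (theta_step _ (Hth j))).
have Hxd : forall j, hdom (x (S j)) /\
   h (x (S j)) <= (1 - theta j) * h (x j) + theta j * h (z (S j)).
  elim=> [|j [IHd _]].
  - have E : x 1%nat = z 1%nat.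
      rewrite Hx; apply vec_ext => i; rewrite /vadd /vscal Htheta0; ring.
    rewrite E Htheta0; split; [exact: Hzdom | lra].
  - have Ht := Hth (S j).
    have [H1 H2] := Hhconv (x (S j)) (z (S (S j))) (1 - theta (S j)) IHd (Hzdom _) ltac:(lra).
    replace (1 - (1 - theta (S j))) with (theta (S j)) in H1, H2 by ring.
    by rewrite Hx; split.
have [_ Hhx] := Hxd k.
set th := theta k.
have Hthk : 0 < th <= 1 := Hth k.
set y' := y (S k). set x' := x (S k). set z' := z (S k). set zk := z k. set xk := x k.
set c := gradg y'.
have Hdes := descent g gradg L HL Hgrad Hlip y' (vsub x' y').
have Ex' : vadd y' (vsub x' y') = x' by apply vec_ext => i; rewrite /vadd /vsub; ring.
have Exy : vsub x' y' = vscal th (vsub z' zk).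
  rewrite /x' /y' Hx Hy; apply vec_ext => i; rewrite /vadd /vsub /vscal -/th /z' /zk; ring.
rewrite Ex' Exy norm_scal dot_scalr Rabs_right in Hdes; last lra.
have Hg1 := grad_ineq g gradg Hgrad Hgconv y' xk.
have Hg2 := grad_ineq g gradg Hgrad Hgconv y' u.
rewrite -/c !dot_subr in Hg1 Hg2.
rewrite -/c dot_subr in Hdes.
have Ecx : dot c x' = (1 - th) * dot c xk + th * dot c z'.
  rewrite /x' Hx /vadd /vscal dot_lin_r //.
have Hopt := opt_cond gradg h hdom A At b L y' zk z' (lam k) th (beta k)
   Hhconv HAlin HAt (Hzdom k) (Hzmin k) u Hu.
rewrite -Hlam -/c !dot_subr in Hopt.
set q := vsub z' zk.
have Hdist := dist_id z' zk u.
rewrite -/q !dot_subr in Hdist.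
rewrite dot_subr.
set N1 := norm q.
have Ecy : dot c y' = (1 - th) * dot c xk + th * dot c zk.
  rewrite /y' Hy /vadd /vscal dot_lin_r //.
rewrite -/q in Hopt.
have Eq : dot q z' - dot q u = (norm q ^ 2 + norm (vsub z' u) ^ 2 - norm (vsub zk u) ^ 2) / 2
  by lra.
rewrite Eq in Hopt.
have Eth2 : (th * norm (vsub z' zk)) ^ 2 = th ^ 2 * norm q ^ 2 by rewrite /q; ring.
rewrite Eth2 in Hdes.
have H1t : 0 <= 1 - th by lra.
rewrite Ecy in Hg1 Hg2 Hdes.
rewrite -/th -/x' -/xk -/z' in Hhx.
have Hw1 := Rmult_le_compat_l (1 - th) _ _ H1t Hg1.
have Hw2 := Rmult_le_compat_l th _ _ (Rlt_le _ _ (proj1 Hthk)) Hg2.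
have Hw3 := Rmult_le_compat_l th _ _ (Rlt_le _ _ (proj1 Hthk)) Hopt.
set D := dot (At (lam k.+1)) u - dot (At (lam k.+1)) z'.
have Key : g x' + h x' - (g u + h u) <=
   (1 - th) * (g xk + h xk - (g u + h u)) + th * D
   + L / 2 * th ^ 2 * (norm (vsub zk u) ^ 2 - norm (vsub z' u) ^ 2).
  rewrite /D; simpl in *; lra.
have Ht' := Hth k.+1.
have Hr := Hrec k. rewrite -/th in Hr.
have Hth2 : 0 < th ^ 2 by simpl; nra.
have Hne : 1 - theta k.+1 <> 0.
  move=> H0; rewrite H0 Rmult_0_r in Hr; simpl in Hr; nra.
have Ecoef : (1 - theta k.+1) / theta k.+1 ^ 2 = 1 / th ^ 2.
  have Hthne0 : th <> 0 by lra.
  rewrite Hr; field; split; [exact Hthne0 | exact Hne].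
rewrite Ecoef -/D.
set F' := g x' + h x' - (g u + h u) in Key *.
set F := g xk + h xk - (g u + h u) in Key *.
set Dl := norm (vsub zk u) ^ 2 - norm (vsub z' u) ^ 2 in Key *.
have Hthne : th <> 0 by lra.
have E : 1 / th ^ 2 * F' - 1 / th * D - ((1 - th) / th ^ 2 * F + L / 2 * Dl)
   = (F' - ((1 - th) * F + th * D + L / 2 * th ^ 2 * Dl)) / th ^ 2 by field.
have : (F' - ((1 - th) * F + th * D + L / 2 * th ^ 2 * Dl)) / th ^ 2 <= 0.
  have Hi : 0 < / th ^ 2 by apply Rinv_0_lt_compat.
  rewrite /Rdiv; nra.
lra.
Qed.
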